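(* Assume (A1), (C1) and (D4) hold, let $\hat x$ be the point in (D4), and let $\{(x^k,y^k)\}$ be generated by the LSAAL algorithm described in the context. Then there exists $\varepsilon_0>0$ such that for all positive integers $\tilde k\le k-1$, $$\mathbb{E}\big[\langle y^k,G(\hat x,\xi_k)\rangle\,\big|\,\mathcal{F}_{\tilde k}\big]\le-\varepsilon_0\,\mathbb{E}\big[\|y^k\|\,\big|\,\mathcal{F}_{\tilde k}\big].$$
   Context: $\mathcal{Y}$ is a finite-dimensional Hilbert space, $\mathcal{K}\subset\mathcal{Y}$ a closed convex cone, $\mathcal{K}^\circ=\{v:\langle v,w\rangle\le0\ \forall w\in\mathcal{K}\}$ its polar cone, $\Pi_{\mathcal{K}^\circ}$ the metric projection. $X\subset\mathbb{R}^n$ nonempty convex compact, contained in an open convex set $\mathcal{O}$. $\xi$ random vector supported on $\Xi\subseteq\mathbb{R}^q$; $F:\mathcal{O}\times\Xi\to\mathbb{R}$, $G:\mathcal{O}\times\Xi\to\mathcal{Y}$ smooth in $x$ for each $\xi$, with gradient $\nabla_xF$, derivative $\mathrm{D}_xG$; $f(x)=\mathbb{E}[F(x,\xi)]$, $g(x)=\mathbb{E}[G(x,\xi)]$. (A1) Samples $\xi_1,\xi_2,\dots$ are i.i.d. copies of $\xi$. (C1) $\mathbb{E}[\nabla_xF(x,\xi)]=\nabla f(x)$ and $\mathbb{E}[\mathrm{D}_xG(x,\xi)]=\mathrm{D}g(x)$ for $x\in\mathcal{O}$. (D4) (Slater) There is $\hat x\in\mathrm{int}\,X$ with $g(\hat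 x)\in\mathrm{int}\,\mathcal{K}$. LSAAL algorithm: $x^1\in X$, $y^1=0$, $\sigma>0$; for $k\ge1$: $l_f^k(x)=F(x^k,\xi_k)+\langle\nabla_xF(x^k,\xi_k),x-x^k\rangle$, $l_g^k(x)=G(x^k,\xi_k)+\mathrm{D}_xG(x^k,\xi_k)(x-x^k)$, $l_\sigma^k(x,y)=l_f^k(x)+\frac{1}{2\sigma}[\|\Pi_{\mathcal{K}^\circ}(y+\sigma l_g^k(x))\|^2-\|y\|^2]$, $x^{k+1}=\mathrm{argmin}_{x\in X}\{l_\sigma^k(x,y^k)+\frac{1}{2\sigma}\|x-x^k\|^2\}$, $y^{k+1}=\Pi_{\mathcal{K}^\circ}(y^k+\sigma l_g^k(x^{k+1}))$. $\mathcal{F}_k$ denotes the $\sigma$-algebra generated by $\xi_1,\dots,\xi_{k-1}$ ($\mathcal{F}_1$ trivial), so that $(x^k,y^k)$ is $\mathcal{F}_k$-measurable. *)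

(* Defs.v *)
From HB Require Import structures.
From mathcomp Require Import all_boot all_order all_algebra.
From mathcomp Require Import all_classical all_reals all_analysis.
Set Implicit Arguments. Unset Strict Implicit. Unset Printing Implicit Defensive.
Import Order.TTheory GRing.Theory Num.Theory.
Import numFieldNormedType.Exports.
Local Open Scope classical_set_scope.
Local Open Scope ring_scope.

Section Defs.
Context {R : realType}.

Definition dotp {m : nat} (u v : 'rV[R]_m) : R := \sum_(i < m) u ord0 i * v ord0 i.
Definition enorm {m : nat} (v : 'rV[R]_m) : R := Num.sqrt (dotp v v).

Definition is_cone {m : nat} (K : set 'rV[R]_m) : Prop :=
  K 0 /\ forall t v, 0 <= t -> K v -> K (t *: v).

Definition polar {m : nat} (K : set 'rV[R]_m) : set 'rV[R]_m :=
  [set v | forall w, K w -> dotp v w <= 0].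

Definition is_proj {m : nat} (C : set 'rV[R]_m) (v p : 'rV[R]_m) : Prop :=
  C p /\ forall w, C w -> enorm (v - p) <= enorm (v - w).

(* metric projection onto C (the unique nearest point when C is nonempty closed convex) *)
Definition proj {m : nat} (C : set 'rV[R]_m) (v : 'rV[R]_m) : 'rV[R]_m :=
  xget 0 [set p | is_proj C v p].


Local Open Scope ereal_scope.

(* sigma-algebra F_k generated by xi_1, ..., xi_{k-1} (F_1 = {emptyset, T}) *)
Definition filtr {d dS} {T : measurableType d} {S : measurableType dS}
  (xi : nat -> T -> S) (k : nat) : set (set T) :=
  <<s [set A | exists i B, (0 < i < k)%N /\ measurable B /\ A = xi i @^-1` B] >>.

Definition meas_wrt {T : Type} (Fs : set (set T)) (f : T -> R) : Prop :=
  forall B : set R, measurable B -> Fs (f @^-1` B).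

(* Y is (a version of) the conditional expectation E[Xr | Fs], Fs a sub-sigma-algebra *)
Definition is_cond_exp {d} {T : measurableType d} (P : probability T R)
  (Fs : set (set T)) (Xr Y : T -> R) : Prop :=
  P.-integrable setT (EFin \o Xr) /\ meas_wrt Fs Y /\
  P.-integrable setT (EFin \o Y) /\
  forall A, Fs A -> \int[P]_(w in A) (Y w)%:E = \int[P]_(w in A) (Xr w)%:E.

(* (A1): xi_1, xi_2, ... are i.i.d. copies of xi0 (indices start at 1) *)
Definition iid_copies {d dS} {T : measurableType d} {S : measurableType dS}
  (P : probability T R) (xi0 : T -> S) (xi : nat -> T -> S) : Prop :=
  measurable_fun setT xi0 /\
  (forall k, (0 < k)%N -> measurable_fun setT (xi k)) /\
  (forall k B, (0 < k)%N -> measurable B -> P (xi k @^-1` B) = P (xi0 @^-1` B)) /\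
  (forall (I : seq nat) (B : nat -> set S), uniq I -> all (fun i => 0 < i)%N I ->
     (forall i, measurable (B i)) ->
     P (\bigcap_(i in [set` I]) (xi i @^-1` B i)) = \prod_(i <- I) P (xi i @^-1` B i)).

Local Close Scope ereal_scope.

Definition Escal {d dS} {T : measurableType d} {S : measurableType dS}
  (P : probability T R) (xi0 : T -> S) (H : S -> R) : R :=
  fine ('E_P[fun w => H (xi0 w)])%E.
Definition Emx {d dS} {T : measurableType d} {S : measurableType dS} {p q : nat}
  (P : probability T R) (xi0 : T -> S) (H : S -> 'M[R]_(p, q)) : 'M[R]_(p, q) :=
  \matrix_(i, j) Escal P xi0 (fun s => H s i j).

(* The LSAAL iteration (indices k >= 1), pathwise for every sample point w. *)
Definition LSAAL {d dS} {T : measurableType d} {S : measurableType dS} {n m : nat}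
  (X : set 'rV[R]_n) (K : set 'rV[R]_m)
  (F : 'rV[R]_n -> S -> R) (G : 'rV[R]_n -> S -> 'rV[R]_m)
  (gradF : 'rV[R]_n -> S -> 'rV[R]_n) (DG : 'rV[R]_n -> S -> 'M[R]_(n, m))
  (sigma : R) (x1 : 'rV[R]_n) (xi : nat -> T -> S)
  (x : nat -> T -> 'rV[R]_n) (y : nat -> T -> 'rV[R]_m) : Prop :=
  let lf k w z := F (x k w) (xi k w) + dotp (gradF (x k w) (xi k w)) (z - x k w) in
  let lg k w z := G (x k w) (xi k w) + (z - x k w) *m DG (x k w) (xi k w) in
  let lsig k w z yy := lf k w z +
      (enorm (proj (polar K) (yy + sigma *: lg k w z)) ^+ 2 - enorm yy ^+ 2) / (2 * sigma) in
  let obj k w z := lsig k w z (y k w) + enorm (z - x k w) ^+ 2 / (2 * sigma) in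
  X x1 /\ 0 < sigma /\
  (forall w, x 1%N w = x1) /\ (forall w, y 1%N w = 0) /\
  forall k w, (0 < k)%N ->
    (X (x k.+1 w) /\ forall z, X z -> obj k w (x k.+1 w) <= obj k w z) /\
    y k.+1 w = proj (polar K) (y k w + sigma *: lg k w (x k.+1 w)).

End Defs.

(* Main.v *)
Require Import Defs.
From HB Require Import structures.
From mathcomp Require Import all_boot all_order all_algebra.
From mathcomp Require Import all_classical all_reals all_analysis.
From mathcomp Require Import lra.
From mathcomp Require Import measurable_realfun.
Import Order.TTheory GRing.Theory Num.Theory.
Import numFieldNormedType.Exports.
Local Open Scope classical_set_scope.
Local Open Scope ring_scope.

Lemma dotp_ge0 {R : realType} {m : nat} (v : 'rV[R]_m) : 0 <= dotp v v.
Proof. by rewrite /dotp; apply: sumr_ge0 => i _; rewrite -expr2 sqr_ge0. Qed.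

Lemma enorm_sqr {R : realType} {m : nat} (v : 'rV[R]_m) : enorm v ^+ 2 = dotp v v.
Proof. by rewrite /enorm sqr_sqrtr // dotp_ge0. Qed.

Lemma enorm_ge0 {R : realType} {m : nat} (v : 'rV[R]_m) : 0 <= enorm v.
Proof. by rewrite /enorm sqrtr_ge0. Qed.

Lemma coord_le_enorm {R : realType} {m : nat} (v : 'rV[R]_m) j : `|v ord0 j| <= enorm v.
Proof.
rewrite /enorm -sqrtr_sqr; apply: ler_wsqrtr.
rewrite /dotp (bigD1 j) //= -expr2 lerDl.
by apply: sumr_ge0 => i _; rewrite -expr2 sqr_ge0.
Qed.

Lemma dotp_addZ (R : realType) m (v a b : 'rV[R]_m) (c : R) :
  dotp v (a + c *: b) = dotp v a + c * dotp v b.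
Proof.
rewrite /dotp mulr_sumr -big_split /=; apply: eq_bigr => i _.
by rewrite !mxE mulrDr mulrCA.
Qed.

Lemma polar_bound {R : realType} {m : nat} (K : set 'rV[R]_m) (g : 'rV[R]_m) :
  interior K g -> exists2 e : R, 0 < e & forall v, polar K v -> dotp v g <= - e * enorm v.
Proof.
move=> /nbhs_ballP [e e0 he].
have hK : forall v : 'rV[R]_m, (forall j, `|g ord0 j - v ord0 j| < e) -> K v.
  move=> v hv; apply: he; split => // i j.
  by rewrite (ord1 i); exact: hv.
have e0' : 0 < e by [].
exists (e / 2); first by rewrite divr_gt0.
move=> v pv.
have [s0|sn0] := eqVneq (enorm v) 0.
  have v0 : forall j, v ord0 j = 0.
    by move=> j; apply/eqP; rewrite -normr_le0 -s0 coord_le_enorm.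
  rewrite s0 mulr0 /dotp big1 // => i _; by rewrite v0 mul0r.
have s0 : 0 < enorm v by rewrite lt0r sn0 enorm_ge0.
set c := e / 2 / enorm v.
have Kw : K (g + c *: v).
  apply: hK => j; rewrite !mxE opprD addNKr normrN normrM.
  rewrite (ger0_norm (ltW _)); last by rewrite /c !divr_gt0.
  have h1 := coord_le_enorm v j.
  apply: (le_lt_trans (y := c * enorm v)).
    by rewrite ler_wpM2l // ltW // /c !divr_gt0.
  rewrite /c -mulrA mulVf ?mulr1 //.
  by rewrite ltr_pdivrMr // ltr_pMr // ltr1n.
have := pv _ Kw; rewrite dotp_addZ -enorm_sqr /c.
have -> : e / 2 / enorm v * enorm v ^+ 2 = e / 2 * enorm v.
  by rewrite expr2 mulrA -(mulrA (e/2)) mulVf ?mulr1.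
by rewrite mulNr; lra.
Qed.

Lemma polar0 {R : realType} {m : nat} (K : set 'rV[R]_m) : polar K 0.
Proof. by move=> w _; rewrite /dotp big1 // => i _; rewrite mxE mul0r. Qed.

Lemma proj_polar {R : realType} {m : nat} (K : set 'rV[R]_m) (v : 'rV[R]_m) : polar K (Defs.proj (polar K) v).
Proof.
rewrite /Defs.proj; case: xgetP => [p _ [] //|_]; exact: polar0.
Qed.

Lemma LSAAL_polar {R : realType} {d dS} {T : measurableType d} {S : measurableType dS} {n m : nat}
  (X : set 'rV[R]_n) (K : set 'rV[R]_m)
  (F : 'rV[R]_n -> S -> R) (G : 'rV[R]_n -> S -> 'rV[R]_m)
  (gradF : 'rV[R]_n -> S -> 'rV[R]_n) (DG : 'rV[R]_n -> S -> 'M[R]_(n, m))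
  (sigma : R) (x1 : 'rV[R]_n) (xi : nat -> T -> S)
  (x : nat -> T -> 'rV[R]_n) (y : nat -> T -> 'rV[R]_m) :
  LSAAL X K F G gradF DG sigma x1 xi x y -> forall k w, (0 < k)%N -> polar K (y k w).
Proof.
move=> [_ [_ [_ [y1 hk]]]] [//|[|k]] w _; first by rewrite y1; exact: polar0.
by have [_ ->] := hk k.+1 w isT; exact: proj_polar.
Qed.

Lemma bigcap_cons {T : Type} {eqI : eqType} (F : eqI -> set T) (a : eqI) (s : seq eqI) :
  \bigcap_(i in [set` (a :: s)]) F i = F a `&` \bigcap_(i in [set` s]) F i.
Proof.
apply/seteqP; split => w /=.
  move=> h; split; first by apply: h; rewrite /= in_cons eqxx.
  by move=> i /= hi; apply: h; rewrite /= in_cons hi orbT.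
move=> [ha hs] i /=; rewrite in_cons => /orP [/eqP -> //|hi]; exact: hs.
Qed.

Section indep.
Context {R : realType} {d dS} {T : measurableType d} {S : measurableType dS}
  (P : probability T R) (xi0 : T -> S) (xi : nat -> T -> S).
Hypothesis iid : iid_copies P xi0 xi.

Definition Gp (k : nat) : set (set T) :=
  [set A | exists (I : seq nat) (B : nat -> set S), uniq I /\
     all (fun i => 0 < i < k)%N I /\ (forall i, measurable (B i)) /\
     A = \bigcap_(i in [set` I]) (xi i @^-1` B i)].

Lemma Gp_meas k : Gp k `<=` measurable.
Proof.
have [_ [mxi _]] := iid.
move=> _ [I [B [_ [hI [mB ->]]]]].
elim: I hI => [|a I IH] /=.
  by move=> _; rewrite (_ : \bigcap_(i in _) _ = setT) //; apply/seteqP; split.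
move=> /andP [ha hI]; rewrite bigcap_cons. apply: measurableI; last exact: IH.
rewrite -[X in measurable X]setTI; apply: (mxi a) => //.
by case/andP: ha.
Qed.

Lemma Gp_setI k : setI_closed (Gp k).
Proof.
move=> _ _ [I1 [B1 [u1 [h1 [m1 ->]]]]] [I2 [B2 [u2 [h2 [m2 ->]]]]].
exists (undup (I1 ++ I2)).
exists (fun i => (if i \in I1 then B1 i else setT) `&` (if i \in I2 then B2 i else setT)).
split; first exact: undup_uniq.
split; first by apply/allP => i; rewrite mem_undup mem_cat => /orP [] hi;
  [exact: (allP h1)|exact: (allP h2)].
split; first by move=> i; apply: measurableI; case: ifP.
apply/seteqP; split => w /=.
  move=> [ha hb] i /=; rewrite mem_undup mem_cat => hi; rewrite /preimage /=.
  split; case: ifP => // hh; [exact: ha|exact: hb].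
move=> h; split => i /= hi.
  by have := h i; rewrite /= mem_undup mem_cat hi /= => /(_ isT) [].
by have := h i; rewrite /= mem_undup mem_cat hi orbT => /(_ isT) [].
Qed.

Lemma Gp_setT k : Gp k setT.
Proof.
exists [::], (fun _ => setT); do 3 split => //.
by apply/seteqP; split.
Qed.

Lemma filtr_Gp k : filtr xi k `<=` <<s Gp k >>.
Proof.
apply: sub_sigma_algebra2 => _ [i [B [hi [mB ->]]]].
exists [:: i], (fun j => if j == i then B else setT); split => //; split.
  by rewrite /= hi.
split.
  by move=> j; case: ifP.
apply/seteqP; split => w /=.
  by move=> h j; rewrite /= inE => /eqP ->; rewrite /preimage /= eqxx.
by move=> h; have := h i; rewrite /= inE eqxx => /(_ isT).
Qed.


Lemma xi_meas k B : (0 < k)%N -> measurable B -> measurable (xi k @^-1` B).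
Proof.
have [_ [mxi _]] := iid.
by move=> hk mB; rewrite -[X in measurable X]setTI; exact: (mxi k).
Qed.

Lemma Gp_indep k A B : (0 < k)%N -> Gp k A -> measurable B ->
  (P (A `&` xi k @^-1` B) = P (xi k @^-1` B) * P A)%E.
Proof.
have [_ [_ [_ hprod]]] := iid.
move=> hk [I [B1 [uI [hI [mB1 ->]]]]] mB.
have kI : k \notin I.
  apply/negP => kI; have := allP hI k kI; by rewrite ltnn andbF.
pose B' := fun j => if j == k then B else B1 j.
have eqI : \bigcap_(i in [set` I]) (xi i @^-1` B' i) = \bigcap_(i in [set` I]) (xi i @^-1` B1 i).
  apply/seteqP; split => w /= h i hi; have := h i hi; rewrite /preimage /= /B';
    by case: eqP => // ei; move: hi; rewrite /= ei (negbTE kI).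
have -> : \bigcap_(i in [set` I]) (xi i @^-1` B1 i) `&` xi k @^-1` B =
    \bigcap_(i in [set` (k :: I)]) (xi i @^-1` B' i).
  by rewrite bigcap_cons eqI setIC /B' /= eqxx.
rewrite hprod //=; last 3 first.
- by rewrite kI uI.
- by rewrite hk; apply: sub_all hI => i /andP [].
- by move=> j; rewrite /B'; case: ifP.
rewrite big_cons /B' eqxx; congr (_ * _)%E.
rewrite hprod //; last by apply: sub_all hI => i /andP [].
apply: eq_big_seq => i hi; case: eqP => // ei; by move: hi; rewrite ei (negbTE kI).
Qed.

Lemma indep_event k A B : (0 < k)%N -> filtr xi k A -> measurable B ->
  (P (A `&` xi k @^-1` B) = P A * P (xi k @^-1` B))%E.
Proof.
move=> hk hA mB.
have mV : measurable (xi k @^-1` B) by exact: xi_meas.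
have r0 : (0 <= fine (P (xi k @^-1` B)))%R by apply: fine_ge0; exact: measure_ge0.
have Vfin : P (xi k @^-1` B) = (fine (P (xi k @^-1` B)))%:E.
  by rewrite fineK //; exact: fin_num_measure.
pose m1 := mrestr P mV.
pose m2 := mscale (NngNum r0) P.
have cov : \bigcup_(i : nat) (fun _ : nat => [set: T]) i = [set: T].
  by apply/seteqP; split => // w _; exists 0%N.
have agree : forall C, Gp k C -> m1 C = m2 C.
  move=> C hC; rewrite /m1 /m2 /mrestr /mscale /= -Vfin; exact: Gp_indep.
have fin : forall i : nat, (m1 [set: T] < +oo)%E.
  move=> _; rewrite /m1 /mrestr setTI; apply: (le_lt_trans (probability_le1 P mV)).
  by rewrite ltry.
have := @g_sigma_algebra_measure_unique _ _ _ (Gp k) (@Gp_meas k) (fun _ => setT)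
  (fun=> Gp_setT k) cov m1 m2 (@Gp_setI k) agree fin A (@filtr_Gp k A hA).
move=> h; transitivity (m1 A); first by [].
transitivity (m2 A); first exact: h.
by rewrite /m2 /mscale /= -Vfin muleC.
Qed.

End indep.

Lemma integrable_eqm {R : realType} {d} {T : measurableType d} (m1 m2 : {measure set T -> \bar R})
  (D : set T) (f : T -> \bar R) : measurable D ->
  (forall X, measurable X -> m1 X = m2 X) -> m1.-integrable D f -> m2.-integrable D f.
Proof.
move=> mD e /integrableP [mf fi]; apply/integrableP; split => //.
by rewrite (eq_measure_integral m1) // => X mX _; rewrite e.
Qed.

Lemma patch_indic_EFin {R : realType} {T : Type} (A : set T) (g : T -> R) :
  ((fun w => (g w)%:E) \_ A) = (fun w => ((\1_A w : R) * g w)%:E).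
Proof. by apply/funext => w; rewrite /patch indicE; case: ifP => _; rewrite ?mul1r ?mul0r. Qed.

Section indep_integral.
Context {R : realType} {d dS : measure_display} {T : measurableType d} {S : measurableType dS}
  (P : probability T R) (G0 : set (set T)) (Xi : T -> S) (m : nat).
Hypothesis hG0 : forall A, <<s G0 >> A -> measurable A.
Hypothesis mXi : measurable_fun setT Xi.
Hypothesis hind : forall A B, <<s G0 >> A -> measurable B ->
  (P (A `&` Xi @^-1` B) = P A * P (Xi @^-1` B))%E.
Variables (f : T -> 'rV[R]_m) (h : S -> 'rV[R]_m).
Hypothesis hf : forall i, meas_wrt (<<s G0 >>) (fun w => f w ord0 i).
Hypothesis mh : forall i, measurable_fun setT (fun s => h s ord0 i).
Hypothesis ih : forall i, P.-integrable setT (EFin \o (fun w => h (Xi w) ord0 i)).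
Hypothesis ifh : P.-integrable setT (EFin \o (fun w => dotp (f w) (h (Xi w)))).

Local Notation TF := (g_sigma_algebraType G0).

Definition idF : T -> TF := fun w => w.
Lemma mid : measurable_fun setT idF.
Proof. by move=> _ B mB; rewrite setTI; apply: hG0. Qed.
HB.instance Definition _ := @isMeasurableFun.Build _ _ T TF idF mid.

Definition Xim : T -> S := Xi.
HB.instance Definition _ := @isMeasurableFun.Build _ _ T S Xim mXi.

Definition Phi : T -> (TF * S)%type := fun w => (idF w, Xim w).
Lemma mPhi : measurable_fun setT Phi.
Proof. exact: measurable_fun_pair mid mXi. Qed.
HB.instance Definition _ := @isMeasurableFun.Build _ _ T (TF * S)%type Phi mPhi.

Definition Q := distribution P idF.
Definition L := distribution P Xim.
Definition M := distribution P Phi.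

Lemma prodE X : measurable X -> (Q \x L)%E X = M X.
Proof.
apply: product_measure_unique => A B mA mB.
rewrite /M /Q /L /distribution /pushforward /=.
exact: hind.
Qed.

Lemma mfTF i : measurable_fun [set: TF] (fun a : TF => f a ord0 i).
Proof. by move=> _ B mB; rewrite setTI; exact: hf. Qed.


Lemma int_Q (g : TF -> \bar R) : measurable_fun [set: TF] g ->
  (\int[Q]_a g a = \int[P]_w g w)%E.
Proof.
move=> mg.
rewrite integralE [RHS]integralE /Q /distribution.
rewrite !ge0_integral_pushforward //.
  exact: measurable_funeneg.
exact: measurable_funepos.
Qed.

Definition cst : 'rV[R]_m := \row_i fine (\int[P]_w (h (Xi w) ord0 i)%:E)%E.

Lemma iL i : L.-integrable setT (EFin \o (fun s => h s ord0 i)).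
Proof.
apply: integrable_pushforward => //; first exact/measurable_EFinP.
exact: ih.
Qed.

Lemma cL i : (\int[L]_s (h s ord0 i)%:E = (cst ord0 i)%:E)%E.
Proof.
rewrite mxE fineK; last exact: integrable_fin_num (ih i).
rewrite /L integral_distribution //.
  exact/measurable_EFinP/mh.
exact: ih.
Qed.

Section fixA.
Variable A : set T.
Hypothesis hA : <<s G0 >> A.

Definition phi (z : (TF * S)%type) : \bar R :=
  ((\1_A z.1 : R) * dotp (f z.1) (h z.2))%:E.

Lemma mphi : measurable_fun setT phi.
Proof.
apply/measurable_EFinP; apply: measurable_funM.
  apply: measurableT_comp; last exact: measurable_fst.
  exact: (@measurable_realfun.measurable_indic _ TF R setT A hA).
rewrite /dotp; apply: measurable_sum => i; apply: measurable_funM.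
  by apply: measurableT_comp (mfTF i) measurable_fst.
by apply: measurableT_comp (mh i) measurable_snd.
Qed.


Lemma ipP : P.-integrable setT (phi \o Phi).
Proof.
apply: le_integrable ifh => //.
  exact: measurableT_comp mphi mPhi.
move=> w _; rewrite /= /phi /= lee_fin normrM.
rewrite -[X in _ <= X]mul1r ler_wpM2r // indicE.
by case: (w \in A); rewrite ?normr1 ?normr0.
Qed.

Lemma iM : M.-integrable setT phi.
Proof.
apply: integrable_pushforward => //.
  exact: mphi.
exact: ipP.
Qed.

Lemma iQL : (Q \x L)%E.-integrable setT phi.
Proof.
apply: (@integrable_eqm _ _ _ M) => //; last exact: iM.
by move=> X mX; symmetry; timeout 20 (exact: (prodE X mX)).
Qed.

Lemma inner (a : TF) : fubini_F L phi a = ((\1_A a : R) * dotp (f a) cst)%:E.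
Proof.
rewrite /fubini_F /phi /=.
under eq_integral => s _.
  rewrite /dotp mulr_sumr -sumEFin.
  under eq_bigr => i _ do rewrite mulrA EFinM.
  over.
rewrite /= integral_sum //; last first.
  by move=> i; apply: integrableZl => //; exact: iL.
rewrite mulr_sumr -sumEFin; apply: eq_bigr => i _.
rewrite integralZl //; last exact: iL.
by rewrite cL mulrA EFinM.
Qed.

Lemma mpsi : measurable_fun [set: TF] (fun a : TF => ((\1_A a : R) * dotp (f a) cst)%:E).
Proof.
apply/measurable_EFinP; apply: measurable_funM.
  exact: (@measurable_realfun.measurable_indic _ TF R setT A hA).
rewrite /dotp; apply: measurable_sum => i; apply: measurable_funM.
  exact: mfTF.
exact: measurable_cst.
Qed.

Lemma MQL : (\int[M]_z phi z = \int[Q \x L]_z phi z)%E.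
Proof.
apply: eq_measure_integral => X mX _.
exact: (esym (prodE X mX)).
Qed.

Lemma indep_integral_A :
  (\int[P]_(w in A) (dotp (f w) (h (Xi w)))%:E = \int[P]_(w in A) (dotp (f w) cst)%:E)%E.
Proof.
rewrite [LHS](integral_mkcond A) [RHS](integral_mkcond A) !patch_indic_EFin.
transitivity (\int[M]_z phi z)%E.
  rewrite /M integral_distribution //; first exact: mphi.
  exact: ipP.
rewrite MQL.
rewrite -integral12_prod_meas1; last exact: iQL.
rewrite -(int_Q _ mpsi); apply: eq_integral => a _; exact: inner.
Qed.
End fixA.
End indep_integral.


Section transfer.
Context {R : realType} {d dS : measure_display} {T : measurableType d} {S : measurableType dS}
  (P : probability T R) (X1 X2 : T -> S) (g : S -> R).
Hypotheses (m1 : measurable_fun setT X1) (m2 : measurable_fun setT X2).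
Hypothesis e : forall B, measurable B -> P (X1 @^-1` B) = P (X2 @^-1` B).
Hypothesis mg : measurable_fun setT g.
Hypothesis i1 : P.-integrable setT (EFin \o (fun w => g (X1 w))).

Definition X1m : T -> S := X1.
HB.instance Definition _ := @isMeasurableFun.Build _ _ T S X1m m1.
Definition X2m : T -> S := X2.
HB.instance Definition _ := @isMeasurableFun.Build _ _ T S X2m m2.

Lemma transfer_int : P.-integrable setT (EFin \o (fun w => g (X2 w))).
Proof.
apply/integrableP; split.
  by apply/measurable_EFinP; exact: measurableT_comp mg m2.
have := i1; move/integrableP => [_ fi].
have -> : (\int[P]_x `|(EFin \o (fun w => g (X2 w))) x| =
    \int[distribution P X2m]_s `|(g s)%:E|)%E.
  rewrite ge0_integral_distribution //.
  by apply/measurable_EFinP; exact: measurableT_comp mg.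
rewrite (eq_measure_integral (distribution P X1m)); last first.
  by move=> X mX _; exact: (esym (e X mX)).
rewrite ge0_integral_distribution //.
by apply/measurable_EFinP; exact: measurableT_comp mg.
Qed.

Lemma transfer_eq : (\int[P]_w (g (X2 w))%:E = \int[P]_w (g (X1 w))%:E)%E.
Proof.
have -> : (\int[P]_w (g (X2 w))%:E = \int[distribution P X2m]_s (g s)%:E)%E.
  rewrite integral_distribution //; first exact/measurable_EFinP.
  exact: transfer_int.
rewrite (eq_measure_integral (distribution P X1m)); last first.
  by move=> X mX _; exact: (esym (e X mX)).
rewrite integral_distribution //; first exact/measurable_EFinP.
Qed.
End transfer.

Section helpers.
Context {R : realType} {d dS : measure_display} {T : measurableType d} {S : measurableType dS}.

Definition gens (xi : nat -> T -> S) (k : nat) : set (set T) :=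
  [set A | exists i B, (0 < i < k)%N /\ measurable B /\ A = xi i @^-1` B].

Lemma filtr_meas (P : probability T R) (xi0 : T -> S) (xi : nat -> T -> S) : iid_copies P xi0 xi ->
  forall k A, filtr xi k A -> measurable A.
Proof.
move=> iid k; apply: smallest_sub; first exact: sigma_algebra_measurable.
move=> _ [i [B [hi [mB ->]]]]; apply: (@xi_meas _ _ _ _ _ P xi0 xi iid i B) => //.
by case/andP: hi.
Qed.

Lemma filtr_mono (xi : nat -> T -> S) kt k : (kt <= k)%N -> filtr xi kt `<=` filtr xi k.
Proof.
move=> hk; apply: sub_sigma_algebra2 => _ [i [B [hi [mB ->]]]].
exists i, B; split => //; case/andP: hi => -> /= hi; exact: leq_trans hi hk.
Qed.

Lemma meas_wrt_TF (G0 : set (set T)) (f : T -> R) :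
  meas_wrt (<<s G0 >>) f -> measurable_fun [set: g_sigma_algebraType G0] f.
Proof. by move=> hf _ B mB; rewrite setTI; exact: hf. Qed.

Lemma meas_wrt_T (Fs : set (set T)) (f : T -> R) :
  (forall A, Fs A -> measurable A) -> meas_wrt Fs f -> measurable_fun setT f.
Proof. by move=> h hf _ B mB; rewrite setTI; exact: h (hf B mB). Qed.

End helpers.

Theorem lemma3p3 (R : realType) (d dS : measure_display)
  (T : measurableType d) (P : probability T R) (S : measurableType dS)
  (n m : nat) (X O : set 'rV[R]_n) (K : set 'rV[R]_m)
  (F : 'rV[R]_n -> S -> R) (G : 'rV[R]_n -> S -> 'rV[R]_m)
  (gradF : 'rV[R]_n -> S -> 'rV[R]_n) (DG : 'rV[R]_n -> S -> 'M[R]_(n, m))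
  (xi0 : T -> S) (xi : nat -> T -> S) (sigma : R) (x1 : 'rV[R]_n)
  (x : nat -> T -> 'rV[R]_n) (y : nat -> T -> 'rV[R]_m) :
  (* standing assumptions *)
  closed K -> convex_set K -> is_cone K ->
  X !=set0 -> convex_set X -> compact X ->
  open O -> convex_set O -> X `<=` O ->
  (forall s z, O z -> differentiable (fun u => F u s) z /\
     forall h, 'd (fun u => F u s) z h = dotp (gradF z s) h) ->
  (forall s z, O z -> differentiable (fun u => G u s) z /\
     forall h, 'd (fun u => G u s) z h = h *m DG z s) ->
  (* the expectations defining f, g and their derivatives exist *)
  (forall z, O z ->
     measurable_fun setT (F z) /\
     (forall i, measurable_fun setT (fun s => G z s ord0 i)) /\
     (forall i, measurable_fun setT (fun s => gradF z s ord0 i)) /\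
     (forall i j, measurable_fun setT (fun s => DG z s i j)) /\
     P.-integrable setT (EFin \o (fun w => F z (xi0 w))) /\
     (forall i, P.-integrable setT (EFin \o (fun w => G z (xi0 w) ord0 i))) /\
     (forall i, P.-integrable setT (EFin \o (fun w => gradF z (xi0 w) ord0 i))) /\
     (forall i j, P.-integrable setT (EFin \o (fun w => DG z (xi0 w) i j)))) ->
  (* (A1) *)
  iid_copies P xi0 xi ->
  (* (C1), with f(z) = E[F(z,xi)] and g(z) = E[G(z,xi)] *)
  (forall z, O z ->
     differentiable (fun u => Escal P xi0 (F u)) z /\
     (forall h, 'd (fun u => Escal P xi0 (F u)) z h = dotp (Emx P xi0 (gradF z)) h) /\
     differentiable (fun u => Emx P xi0 (G u)) z /\
     (forall h, 'd (fun u => Emx P xi0 (G u)) z h = h *m Emx P xi0 (DG z))) ->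
  (* the LSAAL iterates *)
  LSAAL X K F G gradF DG sigma x1 xi x y ->
  (* (x^k, y^k) is F_k-measurable *)
  (forall k, (0 < k)%N ->
     (forall i, meas_wrt (filtr xi k) (fun w => x k w ord0 i)) /\
     (forall i, meas_wrt (filtr xi k) (fun w => y k w ord0 i))) ->
  (* (D4) with the Slater point xhat *)
  forall xhat : 'rV[R]_n,
  interior X xhat -> interior K (Emx P xi0 (G xhat)) ->
  exists2 eps0 : R, 0 < eps0 &
    forall k kt : nat, (0 < kt)%N -> (kt <= k.-1)%N ->
    forall Y1 Y2 : T -> R,
      is_cond_exp P (filtr xi kt) (fun w => dotp (y k w) (G xhat (xi k w))) Y1 ->
      is_cond_exp P (filtr xi kt) (fun w => enorm (y k w)) Y2 ->
      {ae P, forall w, Y1 w <= - eps0 * Y2 w}.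
Proof.
move=> Kcl Kcv Kcone Xne Xcv Xcp Oop Ocv XO hF hG hmeas iid hC1 hL hyx xhat hxhat hg.
have [eps eps0 hpol] := polar_bound K _ hg.
exists eps => // k kt kt0 ktk Y1 Y2 hY1 hY2.
have ktk' : (kt <= k)%N := leq_trans ktk (leq_pred k).
have k0 : (0 < k)%N := leq_trans kt0 ktk'.
have Oxh : O xhat := XO _ (interior_subset hxhat).
have [_ [mGi [_ [_ [_ [iGi _]]]]]] := hmeas xhat Oxh.
have [mxi0 [mxi [law _]]] := iid.
have lawk : forall B, measurable B -> P (xi0 @^-1` B) = P (xi k @^-1` B).
  by move=> B mB; rewrite (law k B k0 mB).
have ihk i : P.-integrable setT (EFin \o (fun w => G xhat (xi k w) ord0 i)).
  exact: (@transfer_int _ _ _ _ _ P xi0 (xi k) (fun s => G xhat s ord0 i) mxi0 (mxi k k0) lawk (mGi i) (iGi i)).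
have eint i : (\int[P]_w (G xhat (xi k w) ord0 i)%:E = \int[P]_w (G xhat (xi0 w) ord0 i)%:E)%E.
  exact: (@transfer_eq _ _ _ _ _ P xi0 (xi k) (fun s => G xhat s ord0 i) mxi0 (mxi k k0) lawk (mGi i) (iGi i)).
have [_ hyk] := hyx k k0.
have [iY1 [mY1 [iY1' hY1A]]] := hY1.
have [iY2 [mY2 [iY2' hY2A]]] := hY2.
set g := Emx P xi0 (G xhat).
have cstE : cst P (xi k) m (G xhat) = g.
  apply/rowP => i; rewrite !mxE /Escal unlock; congr fine; exact: eint.
have fmeas := @filtr_meas _ _ _ _ _ P xi0 xi iid.
have key A : filtr xi kt A -> (\int[P]_(w in A) (dotp (y k w) (G xhat (xi k w)))%:E =
    \int[P]_(w in A) (dotp (y k w) g)%:E)%E.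
  move=> hA; rewrite -cstE.
  have hG0 : forall B, <<s gens xi k >> B -> measurable B by move=> B hB; exact: (fmeas k).
  have hind : forall B C, <<s gens xi k >> B -> measurable C ->
      (P (B `&` xi k @^-1` C) = P B * P (xi k @^-1` C))%E.
    by move=> B C hB mC; exact: (@indep_event _ _ _ _ _ P xi0 xi iid k B C k0 hB mC).
  apply: (@indep_integral_A _ _ _ _ _ P (gens xi k) (xi k) m hG0 (mxi k k0) hind
    (y k) (G xhat)).
  - exact: hyk.
  - exact: mGi.
  - exact: ihk.
  - exact: iY1.
  - by move: hA; apply: filtr_mono.
move/LSAAL_polar: (hL) => ypol.
have hb w : dotp (y k w) g <= - eps * enorm (y k w) := hpol _ (ypol k w k0).
set Z := fun w => Y1 w + eps * Y2 w.
have mZTF : measurable_fun [set: g_sigma_algebraType (gens xi kt)] Z.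
  apply: measurable_funD; first exact: (@meas_wrt_TF _ _ _ (gens xi kt) Y1 mY1).
  apply: measurable_funM; first exact: measurable_cst.
  exact: (@meas_wrt_TF _ _ _ (gens xi kt) Y2 mY2).
have hA0 : filtr xi kt [set w | 0 < Z w].
  have := mZTF measurableT `]0, +oo[%classic (measurable_itv _).
  rewrite setTI => h.
  rewrite (_ : [set w | 0 < Z w] = Z @^-1` `]0, +oo[%classic); first exact: h.
  by apply/seteqP; split => w /=; rewrite in_itv /= andbT.
set A0 := [set w | 0 < Z w].
have mA0 : measurable A0 := fmeas kt A0 hA0.
have mZ : measurable_fun setT Z.
  apply: measurable_funD; first exact: (@meas_wrt_T _ _ _ (filtr xi kt) Y1 (fmeas kt) mY1).
  apply: measurable_funM; first exact: measurable_cst.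
  exact: (@meas_wrt_T _ _ _ (filtr xi kt) Y2 (fmeas kt) mY2).
have i1 : P.-integrable A0 (EFin \o Y1) := integrableS measurableT mA0 (@subsetT _ _) iY1'.
have i2 : P.-integrable A0 (EFin \o Y2) := integrableS measurableT mA0 (@subsetT _ _) iY2'.
have ie : P.-integrable A0 (EFin \o (fun w => enorm (y k w))) :=
  integrableS measurableT mA0 (@subsetT _ _) iY2.
have I1 : (\int[P]_(w in A0) (Y1 w)%:E = \int[P]_(w in A0) (dotp (y k w) g)%:E)%E.
  by rewrite hY1A // key.
have I2 : (\int[P]_(w in A0) (Y2 w)%:E = \int[P]_(w in A0) (enorm (y k w))%:E)%E.
  exact: hY2A.
have my i : measurable_fun setT (fun w => y k w ord0 i) := @meas_wrt_T _ _ _ (filtr xi k) _ (fmeas k) (hyk i).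
have mdot : measurable_fun setT (fun w => dotp (y k w) g).
  rewrite /dotp; apply: measurable_sum => i; apply: measurable_funM (my i) _.
  exact: measurable_cst.
set C := \sum_(i < m) `|g ord0 i|.
have C0 : 0 <= C by apply: sumr_ge0 => i _.
have idot : P.-integrable A0 (EFin \o (fun w => dotp (y k w) g)).
  apply: (le_integrable mA0 _ _ (integrableZl mA0 C ie)).
    by apply: measurable_funTS; exact/measurable_EFinP.
  move=> w _ /=; rewrite lee_fin (ger0_norm (mulr_ge0 C0 (enorm_ge0 _))) /dotp.
  apply: le_trans (ler_norm_sum _ _ _) _; rewrite /C mulr_suml; apply: ler_sum => i _.
  by rewrite normrM mulrC ler_wpM2l // coord_le_enorm.
have le1 : (\int[P]_(w in A0) (dotp (y k w) g)%:E <=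
    \int[P]_(w in A0) ((- eps)%:E * (enorm (y k w))%:E))%E.
  apply: le_integral => //; first exact: (integrableZl mA0 (- eps) ie).
  by move=> w _; rewrite -EFinM lee_fin; exact: hb.
rewrite integralZl // in le1.
have fin1 := integrable_fin_num mA0 idot.
have fin2 := integrable_fin_num mA0 ie.
have IZ : (\int[P]_(w in A0) (Z w)%:E =
    \int[P]_(w in A0) (Y1 w)%:E + eps%:E * \int[P]_(w in A0) (Y2 w)%:E)%E.
  rewrite -integralZl // -integralD //; last exact: integrableZl.
have IZ0 : (\int[P]_(w in A0) (Z w)%:E <= 0)%E.
  rewrite IZ I1 I2; move: le1.
  rewrite -(fineK fin1) -(fineK fin2) -!EFinM -EFinD !lee_fin.
  move=> h; rewrite mulNr in h; lra.
have Zabs : (\int[P]_(w in A0) `|(EFin \o Z) w| = 0)%E.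
  apply/eqP; rewrite eq_le; apply/andP; split; last first.
    by apply: integral_ge0 => w _; exact: abse_ge0.
  rewrite (eq_integral (fun w => (Z w)%:E)) //.
  by move=> w; rewrite inE => A0w /=; rewrite ger0_norm // ltW.
have mZE : measurable_fun setT (EFin \o Z) by exact/measurable_EFinP.
have hae := (ae_eq_integral_abs P mA0 (measurable_funTS mZE)).1 Zabs.
move: hae; rewrite /ae_eq => hae; apply: filterS hae => w /= h.
have [//|hlt] := leP (Y1 w) (- eps * Y2 w).
have A0w : A0 w by rewrite /A0 /Z /=; lra.
have := h A0w; move=> /(congr1 fine) /= hz.
by move: A0w; rewrite /A0 /= hz ltxx.
Qed.
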